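(* Let $d,g\ge 1$ be integers, $n=dg$, and let $\pi$ be a permutation of $\{0,\dots,n-1\}$ such that $\pi(i)\neq i$ for all $i$. Then any routing of $\pi$ on the network $\mathrm{POPS}(d,g)$ uses at least $\lceil d/g\rceil$ slots.
   Context: The network $\mathrm{POPS}(d,g)$ has $n=dg$ processors indexed $0,\dots,n-1$; processor $i$ belongs to group $\mathrm{group}(i):=\lfloor i/d\rfloor\in\{0,\dots,g-1\}$. For each pair of groups $a,b$ there is a coupler $c(b,a)$ whose sources are the processors of group $a$ and whose destinations are the processors of group $b$ ($g^2$ couplers in total). Processor $i$ can transmit to the couplers $c(a,\mathrm{group}(i))$, $a=0,\dots,g-1$, and receive from the couplers $c(\mathrm{group}(i),b)$, $b=0,\dots,g-1$. In one slot each processor, in parallel, performs local computation, sends one packet to any subset of its transmitters, and receives a packet from one of its receivers; no two processors may send to the same coupler in the same slot. Processors may store packets between slots. Routing a permutation $\pi$ means: initially processor $i$ holds packet $p_i$ with destination $\pi(i)$, and at the end each $p_i$ must be at processor $\pi(i)$. *)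

(* Defs.v *)
From mathcomp Require Import all_boot all_fingroup.
Set Implicit Arguments. Unset Strict Implicit. Unset Printing Implicit Defensive.

(* Processors are 'I_(d*g); packets are identified by their source index
   (packet p_i is named i). group i = i / d (a nat, < g when d > 0);
   groups used as coupler indices have type 'I_g. *)
Definition group (d : nat) (i : nat) : nat := i %/ d.

(* One slot: processor i optionally sends one packet p to the set A of its
   transmitters (transmitter a means coupler c(a, group i)), and optionally
   listens to one receiver b (coupler c(group i, b)). *)
Record slot (d g : nat) := Slot {
  send : 'I_(d * g) -> option ('I_(d * g) * {set 'I_g});
  recv : 'I_(d * g) -> option 'I_g }.

Definition state (d g : nat) := 'I_(d * g) -> {set 'I_(d * g)}.

(* a slot is legal in state S: a processor only sends a packet it holds, and
   no two distinct processors send to the same coupler c(a, b)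
   (two processors share a transmitter coupler iff same group and same a) *)
Definition slot_ok (d g : nat) (S : state d g) (s : slot d g) : Prop :=
  (forall i p A, send s i = Some (p, A) -> p \in S i) /\
  (forall i j p q A B (a : 'I_g), i != j ->
     send s i = Some (p, A) -> send s j = Some (q, B) ->
     group d i = group d j -> a \in A -> a \in B -> False).

(* packets received by processor j: the packet sent on coupler
   c(group j, b) where b is j's chosen receiver *)
Definition received (d g : nat) (s : slot d g) (j : 'I_(d * g)) :
  {set 'I_(d * g)} :=
  [set p | [exists i : 'I_(d * g),
     match send s i, recv s j with
     | Some (q, A), Some b =>
         [&& q == p, group d i == val b & [exists a in A, val a == group d j]]
     | _, _ => false
     end]].

Definition step (d g : nat) (S : state d g) (s : slot d g) : state d g :=
  fun j => S j :|: received s j.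

Fixpoint run_ok (d g : nat) (S : state d g) (ss : seq (slot d g)) : Prop :=
  match ss with
  | [::] => True
  | s :: r => slot_ok S s /\ run_ok (step S s) r
  end.

Definition final (d g : nat) (S : state d g) (ss : seq (slot d g)) : state d g :=
  foldl (@step d g) S ss.

Definition init (d g : nat) : state d g := fun i => [set i].

Definition routes (d g : nat) (pi : {perm 'I_(d * g)}) (ss : seq (slot d g)) :
  Prop :=
  run_ok (@init d g) ss /\ forall i, i \in final (@init d g) ss (pi i).

Definition ceil_div (a b : nat) : nat := (a + b.-1) %/ b.

(* Main.v *)
Require Import Defs.
From mathcomp Require Import all_boot all_fingroup.
From mathcomp Require Import zify.
Require Import Defs.

Set Implicit Arguments. Unset Strict Implicit. Unset Printing Implicit Defensive.

Section Aux.
Variables d g : nat.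
Notation P := ('I_(d * g)).

Definition ok2 (s : slot d g) : Prop :=
  forall i j p q A B (a : 'I_g), i != j ->
     send s i = Some (p, A) -> send s j = Some (q, B) ->
     group d i = group d j -> a \in A -> a \in B -> False.

Definition R (s : slot d g) : {set P} := \bigcup_(j : P) received s j.

Definition fsend (s : slot d g) (ba : 'I_g * 'I_g) : option P :=
  match [pick i : P | match send s i with
                      | Some (p, A) => (group d i == val ba.1) && (ba.2 \in A)
                      | None => false end] with
  | Some i => match send s i with Some (p, _) => Some p | None => None end
  | None => None
  end.

Lemma R_card s : ok2 s -> #|R s| <= g * g.
Proof.
move=> ok.
have -> : #|R s| = #|[set Some p | p in R s]|.
  by rewrite card_imset //; move=> x y [].
have sub : [set Some p | p in R s] \subset [set fsend s ba | ba in [set: 'I_g * 'I_g]].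
  apply/subsetP=> x /imsetP [p /bigcupP [j _ Hp] ->].
  move: Hp; rewrite inE => /existsP [i].
  case Es: (send s i) => [[q A]|] //; case Er: (recv s j) => [b|] //.
  case/and3P => /eqP Eq /eqP Eg /existsP [a /andP [aA _]].
  apply/imsetP; exists (b, a); first by rewrite inE.
  rewrite /fsend; case: pickP => [i' |].
    case Es': (send s i') => [[q' A'] |] // /andP [/eqP Eg' aA'].
    case: (eqVneq i' i) => [Eii|Nii].
      by move: Es'; rewrite Eii Es => -[<- _]; rewrite Eq.
    by exfalso; apply: (ok _ _ _ _ _ _ a Nii Es' Es) => //; rewrite Eg Eg'.
  by move=> /(_ i); rewrite Es Eg eqxx aA.
apply: leq_trans (subset_leq_card sub) _.
apply: leq_trans (leq_imset_card _ _) _.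
by rewrite cardsT card_prod !card_ord.
Qed.

Lemma run_ok2 (S : state d g) (ss : seq (slot d g)) : run_ok S ss -> forall s, List.In s ss -> ok2 s.
Proof.
elim: ss S => [|s0 ss IH] S //= [[_ h] hr] s.
case=> [<- | ]; first exact: h.
exact: IH hr s.
Qed.

Lemma U_card ss : (forall s, List.In s ss -> ok2 s) ->
  #|\bigcup_(s <- ss) R s| <= size ss * (g * g).
Proof.
elim: ss => [|s ss IH] H; first by rewrite big_nil cards0.
rewrite big_cons /=.
apply: leq_trans (leq_card_setU _ _) _.
rewrite mulSn leq_add //.
  by apply: R_card; apply: H; left.
by apply: IH => t ht; apply: H; right.
Qed.

Lemma final_sub (ss : seq (slot d g)) : forall (S : state d g) j,
  final S ss j \subset S j :|: \bigcup_(s <- ss) R s.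
Proof.
elim: ss => [|s ss IH] S j /=.
  by rewrite big_nil setU0 subxx.
rewrite /final /= -/(final _ _).
apply: subset_trans (IH _ j) _.
rewrite big_cons /step.
apply/subsetP => x; rewrite !in_setU => /orP [/orP [->|h]|->] //; last by rewrite !orbT.
apply/orP; right; apply/orP; left.
by apply/bigcupP; exists j.
Qed.

End Aux.

Theorem proposition1 (d g : nat) (hd : 0 < d) (hg : 0 < g)
    (pi : {perm 'I_(d * g)}) (hpi : forall i, pi i != i)
    (ss : seq (slot d g)) (hr : routes pi ss) :
  ceil_div d g <= size ss.
Proof.
case: hr => hok hfin.
have hU : \bigcup_(s <- ss) R s = setT.
  apply/setP => i; rewrite inE.
  have := subsetP (final_sub ss (@init d g) (pi i)) i (hfin i).
  rewrite !inE => /orP [/eqP E|//].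
  by move: (hpi i); rewrite -E eqxx.
have := U_card (run_ok2 hok).
rewrite hU cardsT card_ord => h.
have h2 : d <= size ss * g.
  have : d * g <= size ss * g * g by rewrite -mulnA.
  by rewrite leq_pmul2r.
rewrite /ceil_div -ltnS ltn_divLR //.
rewrite mulSn; move: hg h2; generalize (size ss * g) => m; lia.
Qed.
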